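(* For $p\in(0,1)$ let $X_p^{(1)},X_p^{(2)}$ be independent geometric random variables, each with $P\{X=k\}=p(1-p)^k$, $k=0,1,2,\dots$, and let $X_p^S=X_p^{(1)}-X_p^{(2)}$. Then $$\inf_{p\in(0,1)}P\left\{|X^S_p-E[X^S_p]|\le\sqrt{\mathrm{Var}(X^S_p)}\right\}=\inf_{p\in(0,1)}P\left\{|X^S_p-E[X^S_p]|<\sqrt{\mathrm{Var}(X^S_p)}\right\}=\frac{\sqrt3}{3}.$$ *)

(* Defs.v *)
From Stdlib Require Import Reals.
From Coquelicot Require Import Coquelicot.
Open Scope R_scope.

Definition geom_pmf (p : R) (k : nat) : R := p * (1 - p) ^ k.

(* Probability space: nat x nat with the product of two geometric(p) laws,
   X1 = first coordinate, X2 = second coordinate (so X1, X2 are independent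
   geometric(p)); the symmetric variable is XS (i,j) = i - j. *)
Definition XS (i j : nat) : R := INR i - INR j.

Definition Eprod (p : R) (f : nat -> nat -> R) : R :=
  Series (fun i => Series (fun j => geom_pmf p i * geom_pmf p j * f i j)).

Definition Pprod (p : R) (A : nat -> nat -> Prop)
  (A_dec : forall i j, {A i j} + {~ A i j}) : R :=
  Eprod p (fun i j => if A_dec i j then 1 else 0).

Definition mean_XS (p : R) : R := Eprod p XS.
Definition var_XS (p : R) : R := Eprod p (fun i j => (XS i j - mean_XS p) ^ 2).

Definition prob_le (p : R) : R :=
  Pprod p (fun i j => Rabs (XS i j - mean_XS p) <= sqrt (var_XS p))
    (fun i j => Rle_dec (Rabs (XS i j - mean_XS p)) (sqrt (var_XS p))).

Definition prob_lt (p : R) : R :=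
  Pprod p (fun i j => Rabs (XS i j - mean_XS p) < sqrt (var_XS p))
    (fun i j => Rlt_dec (Rabs (XS i j - mean_XS p)) (sqrt (var_XS p))).

(* Main.v *)
Require Import Defs.
From Stdlib Require Import Reals Lra Lia Psatz.
From Coquelicot Require Import Coquelicot.
Open Scope R_scope.

Lemma ser_ext (a b : nat -> R) (la lb : R) :
  (forall n, a n = b n) -> la = lb -> is_series a la -> is_series b lb.
Proof. intros H E S; subst; exact (is_series_ext _ _ _ H S). Qed.

Lemma ser_lin2 (a b : nat -> R) (la lb x y : R) :
  is_series a la -> is_series b lb ->
  is_series (fun n => x * a n + y * b n) (x * la + y * lb).
Proof.
  intros Ha Hb.
  exact (is_series_plus _ _ _ _ (is_series_scal x _ _ Ha) (is_series_scal y _ _ Hb)).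
Qed.

Lemma ser_lin3 (a b c : nat -> R) (la lb lc x y z : R) :
  is_series a la -> is_series b lb -> is_series c lc ->
  is_series (fun n => x * a n + y * b n + z * c n) (x * la + y * lb + z * lc).
Proof.
  intros Ha Hb Hc.
  pose proof (ser_lin2 (fun n => x * a n + y * b n) c (x*la+y*lb) lc 1 z
     (ser_lin2 a b la lb x y Ha Hb) Hc) as H.
  eapply ser_ext. 3: exact H. intros; simpl; ring. ring.
Qed.


Lemma G0 (p : R) (Hp : 0 < p < 1) : is_series (fun n => (1 - p) ^ n) (1 / p).
Proof.
  eapply ser_ext. 3: apply is_series_geom. intros; reflexivity.
  field; lra. rewrite Rabs_pos_eq; lra.
Qed.

Lemma sum_id1 (n : nat) : sum_f_R0 (fun k => INR k + 1) n = (INR n + 1) * (INR n + 2) / 2.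
Proof.
  induction n. simpl; lra. rewrite tech5.
  rewrite IHn. rewrite !S_INR. field.
Qed.

Lemma M1 (p : R) (Hp : 0 < p < 1) : is_series (fun n => (INR n + 1) * (1 - p) ^ n) (1 / p ^ 2).
Proof.
  assert (H := is_series_mult_pos _ _ _ _ (G0 p Hp) (G0 p Hp)).
  eapply ser_ext. 3: apply H.
  - intros n. cbv beta. rewrite (sum_eq _ (fun _ => (1-p)^n)).
    + rewrite sum_cte, S_INR; ring.
    + intros i Hi. rewrite <- pow_add. f_equal; lia.
  - field; lra.
  - intros; apply pow_le; lra.
  - intros; apply pow_le; lra.
Qed.

Lemma M2 (p : R) (Hp : 0 < p < 1) : is_series (fun n => (INR n + 1) * (INR n + 2) / 2 * (1 - p) ^ n) (1 / p ^ 3).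
Proof.
  assert (H := is_series_mult_pos _ _ _ _ (M1 p Hp) (G0 p Hp)).
  eapply ser_ext. 3: apply H.
  - intros n. cbv beta. rewrite (sum_eq _ (fun k => (INR k + 1) * (1-p)^n)).
    + rewrite <- (sum_id1 n).
      rewrite <- scal_sum. ring.
    + intros i Hi. rewrite Rmult_assoc, <- pow_add. do 2 f_equal; lia.
  - field; lra.
  - intros; apply Rmult_le_pos. apply Rplus_le_le_0_compat; [apply pos_INR|lra]. apply pow_le; lra.
  - intros; apply pow_le; lra.
Qed.

Lemma G1 (p : R) (Hp : 0 < p < 1) : is_series (fun n => INR n * (1 - p) ^ n) ((1 - p) / p ^ 2).
Proof.
  eapply ser_ext. 3: apply (ser_lin2 _ _ _ _ 1 (-1) (M1 p Hp) (G0 p Hp)).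
  intros; simpl; ring. field; lra.
Qed.

Lemma G2 (p : R) (Hp : 0 < p < 1) : is_series (fun n => INR n ^ 2 * (1 - p) ^ n) ((1 - p) * (2 - p) / p ^ 3).
Proof.
  eapply ser_ext. 3: apply (ser_lin3 _ _ _ _ _ _ 2 (-3) 1 (M2 p Hp) (M1 p Hp) (G0 p Hp)).
  intros; simpl; field. field; lra.
Qed.

Lemma Sh (K : nat) (c r : R) : Rabs r < 1 ->
  is_series (fun i => if (i <? K)%nat then 0 else c * r ^ (i - K)) (c / (1 - r)).
Proof.
  intros Hr.
  destruct K.
  - eapply ser_ext. 3: apply (is_series_scal c _ _ (is_series_geom r Hr)).
    intros n; simpl. rewrite Nat.sub_0_r; reflexivity. reflexivity.
  - apply (is_series_decr_n _ (S K)). lia.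
    rewrite (sum_n_ext_loc _ (fun _ => 0)).
    2:{ intros n Hn. simpl pred in Hn. destruct (Nat.ltb_spec n (S K)); [reflexivity| lia]. }
    rewrite sum_n_const.
    eapply ser_ext. 3: apply (is_series_scal c _ _ (is_series_geom r Hr)).
    intros n. destruct (Nat.ltb_spec (S K + n) (S K)). lia.
    replace (S K + n - S K)%nat with n by lia. reflexivity.
    change (c * / (1 - r) = c / (1 - r) + - (INR (S (pred (S K))) * 0)). 
    unfold Rdiv; ring.
Qed.

Lemma Eprod_is (p : R) (f : nat -> nat -> R) (b : nat -> R) (L : R) :
  (forall i, is_series (fun j => geom_pmf p i * geom_pmf p j * f i j) (b i)) ->
  is_series b L -> Eprod p f = L.
Proof.
  intros H1 H2. unfold Eprod.
  rewrite (Series_ext _ b). now apply is_series_unique.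
  intros i; apply is_series_unique, H1.
Qed.

Lemma mean0 p : 0 < p < 1 -> mean_XS p = 0.
Proof.
  intros Hp. unfold mean_XS.
  apply (Eprod_is _ _ (fun i => p * (1-p)^i * (INR i - (1-p)/p))).
  - intros i.
    eapply ser_ext. 3: apply (ser_lin2 _ _ _ _ (p * (1-p)^i * INR i * p) (- (p*(1-p)^i) * p) (G0 p Hp) (G1 p Hp)).
    intros j; unfold geom_pmf, XS; ring. field; lra.
  - eapply ser_ext. 3: apply (ser_lin2 _ _ _ _ p (-(1-p)) (G1 p Hp) (G0 p Hp)).
    intros j; cbv beta; field; lra. field; lra.
Qed.

Lemma var_val p : 0 < p < 1 -> var_XS p = 2 * (1 - p) / p ^ 2.
Proof.
  intros Hp. unfold var_XS. rewrite mean0 by exact Hp.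
  apply (Eprod_is _ _ (fun i => p * (1-p)^i * (INR i ^ 2 - 2 * INR i * (1-p)/p + (1-p)*(2-p)/p^2))).
  - intros i.
    eapply ser_ext. 3: apply (ser_lin3 _ _ _ _ _ _ (p * (1-p)^i * INR i ^ 2 * p) (- (p*(1-p)^i) * 2 * INR i * p) (p*(1-p)^i * p) (G0 p Hp) (G1 p Hp) (G2 p Hp)).
    intros j; unfold geom_pmf, XS; ring. field; lra.
  - eapply ser_ext. 3: apply (ser_lin3 _ _ _ _ _ _ p (-2*(1-p)) ((1-p)*(2-p)/p) (G2 p Hp) (G1 p Hp) (G0 p Hp)).
    intros j; cbv beta; field; lra. field; lra.
Qed.


Lemma pw (q : R) (a b c : nat) : (a + b = c)%nat -> q ^ a * q ^ b = q ^ c.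
Proof. intros <-; now rewrite pow_add. Qed.

Lemma prob_gen p n (A : nat -> nat -> Prop) (dec : forall i j, {A i j} + {~ A i j}) :
  0 < p < 1 -> (1 <= n)%nat -> (forall i j, A i j <-> (i < j + n /\ j < i + n)%nat) ->
  Pprod p A dec = 1 - 2 * (1 - p) ^ n / (2 - p).
Proof.
  intros Hp Hn HA. set (q := 1 - p).
  assert (Hq : Rabs q < 1) by (unfold q; rewrite Rabs_pos_eq; lra).
  assert (Hq2 : Rabs (q ^ 2) < 1) by (unfold q; rewrite Rabs_pos_eq; nra).
  unfold Pprod.
  apply (Eprod_is _ _ (fun i => p * q ^ i * q ^ (i + 1 - n) - p * q ^ i * q ^ (i + n))).
  - intros i.
    eapply ser_ext. 3: apply (ser_lin2 _ _ _ _ (p * q ^ i) (- (p * q ^ i))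
       (Sh (i + 1 - n) (p * q ^ (i + 1 - n)) q Hq) (Sh (i + n) (p * q ^ (i + n)) q Hq)).
    + intros j. cbv beta. unfold geom_pmf. fold q.
      destruct (dec i j) as [a|a]; rewrite HA in a;
      destruct (Nat.ltb_spec j (i + 1 - n)); destruct (Nat.ltb_spec j (i + n)); try lia.
      * rewrite (Rmult_assoc p (q ^ (i+1-n))), (pw _ (i+1-n) (j - (i+1-n)) j) by lia. ring.
      * ring.
      * rewrite (Rmult_assoc p (q ^ (i+1-n))), (pw _ (i+1-n) (j - (i+1-n)) j) by lia.
        rewrite (Rmult_assoc p (q ^ (i+n))), (pw _ (i+n) (j - (i+n)) j) by lia. ring.
    + unfold q; field; lra.
  - assert (X := ser_lin2 _ _ _ _ p (-1) (G0 p Hp) (Sh n (p * q ^ n) q Hq)).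
    assert (Y := ser_lin3 _ _ _ _ _ _ 1 1 (- (p * q ^ n)) X
                   (Sh n (p * q ^ (n + 1)) (q ^ 2) Hq2) (is_series_geom _ Hq2)).
    eapply ser_ext. 3: exact Y.
    + intros i. cbv beta. fold q.
      rewrite <- !pow_mult.
      destruct (Nat.ltb_spec i n).
      * replace (i + 1 - n)%nat with 0%nat by lia.
        rewrite (Rmult_assoc p (q ^ i) (q ^ (i + n))), (pw _ i (i + n) (n + 2 * i)) by lia.
        rewrite (pow_add q n). ring.
      *
        rewrite (Rmult_assoc p (q ^ i) (q ^ (i + n))), (pw _ i (i + n) (n + 2 * i)) by lia.
        rewrite (Rmult_assoc p (q ^ i) (q ^ (i + 1 - n))), (pw _ i (i + 1 - n) (n + 1 + 2 * (i - n))) by lia.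
        rewrite (Rmult_assoc p (q ^ n) (q ^ (i - n))), (pw _ n (i - n) i) by lia.
        rewrite (Rmult_assoc p (q ^ (n+1)) (q ^ (2 * (i - n)))), (pw _ (n+1) (2 * (i - n)) (n + 1 + 2 * (i - n))) by lia.
        rewrite (pow_add q n (2 * i)). ring.
    + replace (n + 1)%nat with (S n) by lia. simpl pow. unfold q.
      field. split; nra.
Qed.


Lemma bern (t : R) (n : nat) : 0 <= t ->
  1 + INR n * t + INR n * (INR n - 1) / 2 * t ^ 2 <= (1 + t) ^ n.
Proof.
  intros Ht. induction n.
  - simpl. lra.
  - rewrite S_INR. simpl pow.
    assert (0 <= INR n) by apply pos_INR.
    assert (H1 : 0 <= INR n * (INR n - 1)).
    { destruct n. simpl; lra. rewrite S_INR. assert (0 <= INR n) by apply pos_INR. nra. }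
    assert (H2 : 0 <= INR n * (INR n - 1) / 2 * t ^ 3).
    { apply Rmult_le_pos. lra. apply pow_le; lra. }
    assert (H3 : (1 + t) * (1 + INR n * t + INR n * (INR n - 1) / 2 * t ^ 2) <= (1 + t) * (1 + t) ^ n).
    { apply Rmult_le_compat_l; lra. }
    simpl pow in *. nra.
Qed.

Lemma sqrt3_facts : sqrt 3 * sqrt 3 = 3 /\ 0 < sqrt 3 /\ sqrt 3 <= 17321 / 10000.
Proof.
  assert (H : sqrt 3 * sqrt 3 = 3) by (apply sqrt_sqrt; lra).
  assert (H1 : 0 < sqrt 3) by (apply sqrt_lt_R0; lra).
  split; [exact H|split; [exact H1|nra]].
Qed.

Lemma fin_ineq (p X : R) : 0 < p < 1 -> 6 * X <= (3 - sqrt 3) * (2 - p) ->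
  sqrt 3 / 3 <= 1 - 2 * X / (2 - p).
Proof.
  intros Hp H.
  assert (E : 1 - 2 * X / (2 - p) - sqrt 3 / 3 = ((3 - sqrt 3) * (2 - p) - 6 * X) / (3 * (2 - p)))
    by (field; lra).
  assert (0 <= ((3 - sqrt 3) * (2 - p) - 6 * X) / (3 * (2 - p))).
  { apply Rmult_le_pos. lra. apply Rlt_le, Rinv_0_lt_compat. lra. }
  lra.
Qed.

Lemma LB p n : 0 < p < 1 -> (1 <= n)%nat -> 2 * (1 - p) <= INR n ^ 2 * p ^ 2 ->
  sqrt 3 / 3 <= 1 - 2 * (1 - p) ^ n / (2 - p).
Proof.
  intros Hp Hn H. apply fin_ineq; auto.
  destruct sqrt3_facts as [r2 [r0 r1]]. set (r := sqrt 3) in *.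
  set (q := 1 - p) in *.
  destruct (Nat.eq_dec n 1) as [->|Hn2].
  - simpl in H |- *. rewrite Rmult_1_r.
    assert (Hq2 : q * q - 4 * q + 1 >= 0) by (unfold q in *; nra).
    assert (Hq : q <= 2 - r).
    { destruct (Rle_or_lt q (2 - r)) as [h|h]; auto.
      assert (q - (2 + r) < 0) by (unfold q; lra).
      assert ((q - (2 - r)) * (q - (2 + r)) < 0) by nra. nra. }
    assert (q * (3 + r) <= (2 - r) * (3 + r)) by (apply Rmult_le_compat_r; lra).
    unfold q in *; nra.
  - assert (HN : 2 <= INR n) by (replace 2 with (INR 2) by (simpl; lra); apply le_INR; lia).
    assert (Hq0 : 0 < q) by (unfold q; lra).
    set (t := p / q).
    assert (Ht0 : 0 < t) by (unfold t; apply Rdiv_lt_0_compat; lra).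
    assert (Hpt : p = t * q) by (unfold t; field; lra).
    assert (Hqt : q * (1 + t) = 1) by (unfold t, q; field; lra).
    assert (HP : q ^ n * (1 + t) ^ n = 1) by (rewrite <- Rpow_mult_distr, Hqt; apply pow1).
    set (P := (1 + t) ^ n) in *.
    set (N := INR n) in *.
    set (u := N * t).
    assert (Hu2 : 2 * (1 + t) <= u * u).
    { unfold u. rewrite Hpt in H.
      assert (2 * q <= (N * t) ^ 2 * q * q) by nra.
      assert (2 <= (N * t) ^ 2 * q) by nra.
      assert (2 * (q * (1 + t)) <= (N * t) ^ 2 * q * (1 + t)) by nra.
      nra. }
    assert (Hu : 7 / 5 <= u).
    { assert (0 < u) by (unfold u; nra). nra. }
    assert (HB := bern t n (Rlt_le _ _ Ht0)). fold P N in HB.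
    assert (HB2 : N * (N - 1) / 2 * t ^ 2 >= u * u / 4) by (unfold u; nra).
    assert (HB3 : 29 / 10 + t / 2 <= P) by (fold u in HB; lra).
    assert (Hq1 : 2 - p = (2 + t) * q) by (rewrite Rmult_plus_distr_r, <- Hpt; unfold q; ring).
    rewrite Hq1.
    assert (0 < P) by lra.
    assert (Hqn : q ^ n = 1 / P).
    { replace (1 / P) with (q ^ n * P / P) by (rewrite HP; reflexivity). field; lra. }
    rewrite Hqn.
    assert (K : 6 * (1 + t) <= (3 - r) * (2 + t) * P).
    { assert (0 <= (2 + t) * (P - (29/10 + t/2))) by nra.
      assert (3 - r >= 12679/10000) by lra.
      nra. }
    assert (6 * (1 / P) * P = 6) by (field; lra).
    assert (q * (1 + t) * P = P) by (rewrite Hqt; ring).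
    apply (Rmult_le_reg_r P); [lra|].
    apply (Rmult_le_reg_r (1 + t)); [lra|].
    nra.
Qed.


Lemma dist_eq i j : Rabs (XS i j - 0) = INR (Nat.max i j - Nat.min i j).
Proof.
  unfold XS. rewrite Rminus_0_r.
  destruct (Nat.le_ge_cases i j).
  - rewrite Nat.max_r, Nat.min_l by lia. rewrite minus_INR by lia.
    rewrite Rabs_left1. ring. assert (INR i <= INR j) by (apply le_INR; lia). lra.
  - rewrite Nat.max_l, Nat.min_r by lia. rewrite minus_INR by lia.
    rewrite Rabs_right. ring. assert (INR j <= INR i) by (apply le_INR; lia). lra.
Qed.

Lemma le_val p n : 0 < p < 1 -> (1 <= n)%nat ->
  INR n - 1 <= sqrt (var_XS p) < INR n -> prob_le p = 1 - 2 * (1 - p) ^ n / (2 - p).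
Proof.
  intros Hp Hn Hs. unfold prob_le. apply prob_gen; auto.
  intros i j. rewrite mean0 by exact Hp. rewrite dist_eq.
  set (d := (Nat.max i j - Nat.min i j)%nat).
  assert (Hd : (i < j + n /\ j < i + n)%nat <-> (d < n)%nat) by (unfold d; lia).
  rewrite Hd. split.
  - intros H. apply INR_lt. lra.
  - intros H. assert (INR d <= INR (n - 1)) by (apply le_INR; lia).
    rewrite minus_INR in H0 by lia. simpl in H0. lra.
Qed.

Lemma lt_val p n : 0 < p < 1 -> (1 <= n)%nat ->
  INR n - 1 < sqrt (var_XS p) <= INR n -> prob_lt p = 1 - 2 * (1 - p) ^ n / (2 - p).
Proof.
  intros Hp Hn Hs. unfold prob_lt. apply prob_gen; auto.
  intros i j. rewrite mean0 by exact Hp. rewrite dist_eq.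
  set (d := (Nat.max i j - Nat.min i j)%nat).
  assert (Hd : (i < j + n /\ j < i + n)%nat <-> (d < n)%nat) by (unfold d; lia).
  rewrite Hd. split.
  - intros H. apply INR_lt. lra.
  - intros H. assert (INR d <= INR (n - 1)) by (apply le_INR; lia).
    rewrite minus_INR in H0 by lia. simpl in H0. lra.
Qed.

Lemma sq_le p N : 0 < p < 1 -> sqrt (var_XS p) <= N -> 2 * (1 - p) <= N ^ 2 * p ^ 2.
Proof.
  intros Hp H. rewrite var_val in H by exact Hp.
  assert (0 <= 2 * (1 - p) / p ^ 2) by (apply Rmult_le_pos; [lra| apply Rlt_le, Rinv_0_lt_compat; nra]).
  assert (E := sqrt_sqrt _ H0).
  assert (0 <= sqrt (2 * (1 - p) / p ^ 2)) by apply sqrt_pos.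
  assert (2 * (1 - p) / p ^ 2 <= N ^ 2) by nra.
  assert (2 * (1 - p) = 2 * (1 - p) / p ^ 2 * p ^ 2) by (field; lra).
  assert (0 < p ^ 2) by nra.
  nra.
Qed.

Lemma lb_le p : 0 < p < 1 -> sqrt 3 / 3 <= prob_le p.
Proof.
  intros Hp.
  destruct (nfloor_ex (sqrt (var_XS p)) (sqrt_pos _)) as [m Hm].
  rewrite (le_val p (S m)); auto; try lia.
  - apply LB; [exact Hp | lia | ]. apply (sq_le p (INR (S m)) Hp). rewrite S_INR; lra.
  - rewrite S_INR; lra.
Qed.

Lemma lb_lt p : 0 < p < 1 -> sqrt 3 / 3 <= prob_lt p.
Proof.
  intros Hp.
  assert (Hv : 0 < sqrt (var_XS p)).
  { apply sqrt_lt_R0. rewrite var_val by exact Hp.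
    apply Rdiv_lt_0_compat; nra. }
  destruct (nfloor1_ex _ Hv) as [m Hm].
  rewrite (lt_val p (S m)); auto; try lia.
  - apply LB; [exact Hp | lia | ]. apply (sq_le p (INR (S m)) Hp). rewrite S_INR; lra.
  - rewrite S_INR; lra.
Qed.

Lemma V0 : 1 - 2 * (2 - sqrt 3) / (2 - (1 - (2 - sqrt 3))) = sqrt 3 / 3.
Proof.
  destruct sqrt3_facts as [r2 [r0 r1]].
  assert (E : 1 - 2 * (2 - sqrt 3) / (2 - (1 - (2 - sqrt 3))) - sqrt 3 / 3 =
              (sqrt 3 * sqrt 3 - 3) / (3 * (3 - sqrt 3))) by (field; lra).
  rewrite r2, Rminus_diag, Rdiv_0_l in E. lra.
Qed.

Lemma p0_val : prob_lt (sqrt 3 - 1) = sqrt 3 / 3.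
Proof.
  destruct sqrt3_facts as [r2 [r0 r1]].
  assert (Hp : 0 < sqrt 3 - 1 < 1) by nra.
  assert (Hv : var_XS (sqrt 3 - 1) = 1).
  { rewrite var_val by exact Hp.
    assert (E : (sqrt 3 - 1) ^ 2 = 2 * (1 - (sqrt 3 - 1))) by (simpl; nra).
    rewrite E. field. lra. }
  rewrite (lt_val _ 1); auto.
  - replace (1 - (sqrt 3 - 1)) with (2 - sqrt 3) by ring.
    replace (sqrt 3 - 1) with (1 - (2 - sqrt 3)) by ring.
    rewrite pow_1. apply V0.
  - rewrite Hv, sqrt_1. simpl. lra.
Qed.

Theorem proposition3p2 :
  Glb_Rbar (fun x => exists p, 0 < p < 1 /\ x = prob_le p) = Finite (sqrt 3 / 3) /\
  Glb_Rbar (fun x => exists p, 0 < p < 1 /\ x = prob_lt p) = Finite (sqrt 3 / 3).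
Proof.
  destruct sqrt3_facts as [r2 [r0 r1]].
  assert (Hh : 0 < 1/2 < 1) by lra.
  split; apply is_glb_Rbar_unique; split.
  - intros x [p [Hp ->]]. simpl. now apply lb_le.
  - intros b Hb.
    destruct b as [b| |]; simpl; auto.
    + destruct (Rle_or_lt b (sqrt 3 / 3)) as [h|h]; auto.
      exfalso.
      set (q0 := 2 - sqrt 3).
      set (e := b - sqrt 3 / 3).
      set (q := q0 - Rmin (e / 4) (q0 / 2)).
      assert (Hq0 : 0 < q0) by (unfold q0; nra).
      assert (He : 0 < e) by (unfold e; lra).
      assert (Hm1 : Rmin (e / 4) (q0 / 2) <= e / 4) by apply Rmin_l.
      assert (Hm2 : Rmin (e / 4) (q0 / 2) <= q0 / 2) by apply Rmin_r.
      assert (Hm3 : 0 < Rmin (e / 4) (q0 / 2)) by (apply Rmin_glb_lt; lra).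
      assert (Hqq : 0 < q < q0) by (unfold q; lra).
      set (p := 1 - q).
      assert (Hp : 0 < p < 1) by (unfold p, q0 in *; nra).
      specialize (Hb (prob_le p) (ex_intro _ p (conj Hp eq_refl))). simpl in Hb.
      rewrite (le_val p 1) in Hb; auto.
      * replace (1 - p) with q in Hb by (unfold p; ring). simpl in Hb.
        assert (D : (1 - 2 * q / (2 - p)) - (1 - 2 * q0 / (2 - (1 - q0)))
                    = 2 * (q0 - q) / ((1 + q) * (1 + q0))).
        { unfold p. field. split; lra. }
        assert (D2 : 2 * (q0 - q) / ((1 + q) * (1 + q0)) <= 2 * (q0 - q)).
        { unfold Rdiv. rewrite <- (Rmult_1_r (2 * (q0 - q))) at 2.
          apply Rmult_le_compat_l. lra.
          rewrite <- Rinv_1. apply Rinv_le_contravar. lra. nra. }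
        assert (q0 - q <= e / 4) by (unfold q; lra).
        pose proof V0 as V. fold q0 in V.
        rewrite Rmult_1_r in Hb. unfold e in *. lra.
      * simpl. split. apply Rle_trans with 0; [lra|apply sqrt_pos].
        rewrite var_val by exact Hp.
        apply (Rlt_le_trans _ (sqrt 1)); [| rewrite sqrt_1; lra].
        apply sqrt_lt_1.
        apply Rmult_le_pos; [unfold p; lra| apply Rlt_le, Rinv_0_lt_compat; nra].
        lra.
        apply (Rmult_lt_reg_r (p ^ 2)). nra.
        unfold Rdiv. rewrite Rmult_assoc, Rinv_l by nra. rewrite Rmult_1_r, Rmult_1_l.
        assert (A1 : q - q0 < 0) by lra.
        assert (A2 : q - (2 + sqrt 3) < 0) by (unfold q0 in *; lra).
        assert (A3 : 0 < (q - q0) * (q - (2 + sqrt 3))) by nra.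
        unfold q0 in A3. unfold p. nra.
    + specialize (Hb (prob_le (1/2)) (ex_intro _ (1/2) (conj Hh eq_refl))). exact Hb.
  - intros x [p [Hp ->]]. simpl. now apply lb_lt.
  - intros b Hb.
    assert (Hp0 : 0 < sqrt 3 - 1 < 1) by nra.
    specialize (Hb _ (ex_intro _ (sqrt 3 - 1) (conj Hp0 eq_refl))).
    rewrite p0_val in Hb. exact Hb.
Qed.
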